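(* Let $G$ be a torsion-free group, $n\in\mathbb N$, and $m>(n-1)^2$ an integer. Then for every cubic function $f:2^m\to G$ we have $|f(2^m)|>n$.
   Context: $2^m=\{0,1\}^m$. For $\mathbf g=(g_1,\dots,g_m)\in(G\setminus\{e\})^m$ and $\mathbf x=(x_1,\dots,x_m)\in 2^m$ put $\mathbf g^{\mathbf x}=g_1^{x_1}\cdots g_m^{x_m}$. A function $f:2^m\to G$ is cubic if there is $\mathbf g\in(G\setminus\{e\})^m$ with $f(\mathbf x)=\mathbf g^{\mathbf x}$ for all $\mathbf x\in 2^m$. A group is torsion-free if every non-neutral element has infinite order. *)

(* Defs.v *)
From HB Require Import structures.
From mathcomp Require Import all_boot all_order all_algebra.
Set Implicit Arguments. Unset Strict Implicit. Unset Printing Implicit Defensive.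

Local Open Scope group_scope.

Definition torsion_free (G : groupType) : Prop :=
  forall (x : G), x != 1 -> forall k : nat, (0 < k)%N -> x ^+ k != 1.

(* 2^m = {0,1}^m is represented by {ffun 'I_m -> bool} (bool coerces to nat,
   false = 0, true = 1).  g^x = g_1^{x_1} ... g_m^{x_m} (ordered product). *)
Definition cubepow (G : groupType) (m : nat) (g : 'I_m -> G)
    (x : {ffun 'I_m -> bool}) : G :=
  \prod_(i < m) (g i) ^+ (x i).

Definition cubic (G : groupType) (m : nat) (f : {ffun 'I_m -> bool} -> G) : Prop :=
  exists g : 'I_m -> G, (forall i, g i != 1) /\
    (forall x : {ffun 'I_m -> bool}, f x = cubepow g x).

Definition image_card (G : groupType) (m : nat) (f : {ffun 'I_m -> bool} -> G) : nat :=
  size (undup (codom f)).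

(* Main.v *)
Require Import Defs.
From HB Require Import structures.
From mathcomp Require Import all_boot all_order all_algebra.
Set Implicit Arguments. Unset Strict Implicit.
Local Open Scope group_scope.

Lemma powinj (G : groupType) (hG : torsion_free G) (a g : G) : g != 1 ->
  injective (fun j : nat => a * g ^+ j).
Proof.
move=> g1.
suff H : forall i j, (i < j)%N -> a * g ^+ i = a * g ^+ j -> False.
  move=> i j /= e; case: (ltngtP i j) => // hij.
  - by case: (H _ _ hij e).
  - by case: (H _ _ hij (esym e)).
move=> i j hij e.
have := mulgI _ _ _ e; rewrite -(subnKC (ltnW hij)) expgnDr -{1}(mulg1 (g ^+ i)) => /(mulgI _ _ _) e2.
have := hG g g1 (j - i) (ltac:(by rewrite subn_gt0)).
by rewrite -e2 eqxx.
Qed.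

Lemma escape (G : groupType) (hG : torsion_free G) (s : seq G) (a0 g : G) :
  g != 1 -> a0 \in s -> exists2 a, a \in s & a * g \notin s.
Proof.
move=> g1 a0s.
case: (boolP (all (fun a => a * g \in s) s)) => [/allP H|/allPn [a ha1 ha2]]; last by exists a.
have Hj : forall j, a0 * g ^+ j \in s.
  elim=> [|j IH]; first by rewrite mulg1.
  rewrite expgSr mulgA; exact: H.
suff: (size s).+1 <= size s by rewrite ltnn.
rewrite -{1}(size_mkseq (fun j => a0 * g ^+ j) (size s).+1); apply: uniq_leq_size.
  by rewrite mkseq_uniq //; apply: powinj.
by move=> x /mapP [j _ ->].
Qed.

Definition ext m (x : {ffun 'I_m -> bool}) (b : bool) : {ffun 'I_m.+1 -> bool} :=
  [ffun i => if unlift ord_max i is Some j then x j else b].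

Lemma ext_pow (G : groupType) m (g : 'I_m.+1 -> G) x b :
  cubepow g (ext x b) = cubepow (fun i => g (widen_ord (leqnSn m) i)) x * g ord_max ^+ b.
Proof.
rewrite /cubepow big_ord_recr /= ffunE unlift_none; congr (_ * _).
apply: eq_bigr => i _; rewrite ffunE.
have -> : widen_ord (leqnSn m) i = lift ord_max i by apply: val_inj; rewrite /= /bump leqNgt ltn_ord.
by rewrite liftK.
Qed.

Lemma grow (G : groupType) (hG : torsion_free G) m (g : 'I_m -> G) :
  (forall i, g i != 1) -> (m < size (undup (codom (cubepow g))))%N.
Proof.
elim: m g => [|m IH] g g1.
  by case: (undup _) (mem_undup (codom (cubepow g)) (cubepow g [ffun=> false])) => //; rewrite codom_f.
set g' := fun i => g (widen_ord (leqnSn m) i).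
have := IH g' (fun i => g1 _).
set s' := codom (cubepow g').
have [a as' ans'] := escape hG (g1 ord_max) (codom_f (cubepow g') [ffun=> false]).
have sub1 : forall y, y \in s' -> y \in codom (cubepow g).
  move=> y /codomP [x ->]; rewrite -[cubepow g' x]mulg1 -(expg0 (g ord_max)) -[0%N]/(nat_of_bool false).
  by rewrite -ext_pow codom_f.
have sub2 : a * g ord_max \in codom (cubepow g).
  move/codomP: as' => [x ->]; rewrite -[g ord_max in X in X \in _]expg1 -[1%N]/(nat_of_bool true).
  by rewrite -ext_pow codom_f.
move=> hm.
apply: leq_trans (_ : size (a * g ord_max :: undup s') <= _); first by [].
apply: uniq_leq_size; first by rewrite /= mem_undup ans' undup_uniq.
by move=> y; rewrite inE mem_undup mem_undup => /orP [/eqP ->|/sub1].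
Qed.

Theorem lemma4p1 (G : groupType) (hG : torsion_free G) (n m : nat)
  (hm : (((n%:Z - 1) ^+ 2 < m%:Z)%R)) (f : {ffun 'I_m -> bool} -> G)
  (hf : cubic f) : (n < image_card f)%N.
Proof.
case: hf => g [g1 hfg].
have := grow hG g1; rewrite /image_card (eq_codom hfg).
apply: leq_trans; rewrite ltnS.
case: n hm => [|[|k]] hm //.
have e : ((k.+2)%:Z - 1 = (k.+1)%:Z)%R by rewrite -addn1 PoszD GRing.addrK.
rewrite e GRing.expr2 -PoszM ltz_nat in hm.
apply: leq_trans hm; by rewrite ltnS leq_pmulr.
Qed.
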